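(* Let $\varphi:\mathbb{R}^n\to[0,\infty]$ be a lower semicontinuous convex function with $\varphi(0)=0$, and let $\varphi^\circ(x)=\sup_{y\in\mathbb{R}^n}\frac{\langle x,y\rangle-1}{\varphi(y)}$. Then for every $t>0$, \[ \underline{K}_{1/t}(\varphi)^\circ\subseteq \underline{K}_t(\varphi^\circ)\subseteq 2\,\underline{K}_{1/t}(\varphi)^\circ . \]
   Context: For a function $\psi$ and $s\in\mathbb{R}$, $\underline{K}_s(\psi)=\{x\in\mathbb{R}^n:\psi(x)\le s\}$. For a set $K\subseteq\mathbb{R}^n$, its polar is $K^\circ=\{y\in\mathbb{R}^n:\ \langle x,y\rangle\le 1\ \text{for all } x\in K\}$. In the definition of $\varphi^\circ$ the usual conventions of the $\mathcal{A}$-transform are used: $a/0=+\infty$ if $a>0$, $a/0=0$ if $a\le 0$, and $a/\infty=0$. *)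

(* Defs.v *)
From HB Require Import structures.
From mathcomp Require Import all_boot all_order all_algebra.
From mathcomp Require Import all_classical all_reals all_analysis.
Set Implicit Arguments. Unset Strict Implicit. Unset Printing Implicit Defensive.
Import Order.TTheory GRing.Theory Num.Theory.
Import numFieldNormedType.Exports.
Local Open Scope classical_set_scope.
Local Open Scope ring_scope.

Definition dotp (R : realType) (n : nat) (x y : 'rV[R]_n) : R :=
  \sum_(i < n) x ord0 i * y ord0 i.

(* convexity of an extended-real valued function (intended for [0,+oo]-valued) *)
Definition econvex (R : realType) (n : nat) (f : 'rV[R]_n -> \bar R) : Prop :=
  forall (x y : 'rV[R]_n) (l : R), 0 < l -> l < 1 ->
    (f (l *: x + (1 - l) *: y)%R <= l%:E * f x + (1 - l)%:E * f y)%E.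

(* a / b with the A-transform conventions:
   a/0 = +oo if a > 0, a/0 = 0 if a <= 0, a/oo = 0 *)
Definition adiv (R : realType) (a : R) (b : \bar R) : \bar R :=
  match b with
  | r%:E => if r == 0 then (if 0 < a then +oo%E else 0%E) else (a / r)%:E
  | _ => 0%E
  end.

Definition polarfun (R : realType) (n : nat) (phi : 'rV[R]_n -> \bar R)
  (x : 'rV[R]_n) : \bar R :=
  ereal_sup [set adiv (dotp x y - 1) (phi y) | y in [set: 'rV[R]_n]].

Definition sublevel (R : realType) (n : nat) (psi : 'rV[R]_n -> \bar R) (s : R)
  : set 'rV[R]_n := [set x | (psi x <= s%:E)%E].

Definition polarset (R : realType) (n : nat) (K : set 'rV[R]_n) : set 'rV[R]_n :=
  [set y | forall x, K x -> dotp x y <= 1].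

Definition dilate (R : realType) (n : nat) (c : R) (K : set 'rV[R]_n) : set 'rV[R]_n :=
  [set c *: x | x in K].

(* Main.v *)
Require Import Defs.
From HB Require Import structures.
From mathcomp Require Import all_boot all_order all_algebra.
From mathcomp Require Import all_classical all_reals all_analysis.
From mathcomp Require Import lra.
Import Order.TTheory GRing.Theory Num.Theory.
Import numFieldNormedType.Exports.
Local Open Scope classical_set_scope.
Local Open Scope ring_scope.

Lemma dotpC (R : realType) (n : nat) (x y : 'rV[R]_n) : dotp x y = dotp y x.
Proof. by rewrite /dotp; apply: eq_bigr => i _; rewrite mulrC. Qed.

Lemma dotpZl (R : realType) (n : nat) (a : R) (x y : 'rV[R]_n) :
  dotp (a *: x) y = a * dotp x y.
Proof.
rewrite /dotp mulr_sumr; apply: eq_bigr => i _; by rewrite mxE mulrA.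
Qed.

Lemma dotpZr (R : realType) (n : nat) (a : R) (x y : 'rV[R]_n) :
  dotp x (a *: y) = a * dotp x y.
Proof. by rewrite dotpC dotpZl dotpC. Qed.

Theorem proposition2p9 (R : realType) (n : nat) (phi : 'rV[R]_n -> \bar R) :
  (forall x, (0 <= phi x)%E) ->
  lower_semicontinuous phi ->
  econvex phi ->
  phi 0 = 0%E ->
  forall t : R, 0 < t ->
    polarset (sublevel phi t^-1) `<=` sublevel (polarfun phi) t /\
    sublevel (polarfun phi) t `<=` dilate 2 (polarset (sublevel phi t^-1)).
Proof.
move=> phi0 _ cvx phi00 t t0; split.
- move=> y Hy; rewrite /sublevel /=; apply: ge_ereal_sup => _ [z _ <-].
  have Hz : forall w, (phi w <= t^-1%:E)%E -> dotp y w <= 1.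
    by move=> w Hw; rewrite dotpC; apply: Hy.
  move: (phi0 z); case Ez: (phi z) => [r| |] r0 //=.
  + have r0' : 0 <= r by rewrite -lee_fin.
    case: ifPn => [/eqP r00|rn0].
    * have : dotp y z <= 1 by apply: Hz; rewrite Ez r00 lee_fin invr_ge0; exact: ltW.
      move=> H; have -> : (0 < dotp y z - 1) = false by apply/negbTE; rewrite -leNgt subr_le0.
      by rewrite lee_fin ltW.
    have rp : 0 < r by rewrite lt_def rn0.
    rewrite lee_fin ler_pdivrMr //.
    have [rle|rgt] := leP r t^-1.
    * have := Hz z; rewrite Ez lee_fin => /(_ rle) H.
      have : 0 <= t * r by rewrite mulr_ge0 // ltW.
      lra.
    * set l := (t * r)^-1.
      have trp : 1 < t * r by rewrite -ltr_pdivrMl // mulr1.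
      have l0 : 0 < l by rewrite invr_gt0; lra.
      have l1 : l < 1 by rewrite invf_lt1 //; lra.
      have := cvx z 0 l l0 l1.
      rewrite scaler0 addr0 phi00 mule0 adde0 Ez -EFinM => Hl.
      have : dotp y (l *: z) <= 1.
        apply: Hz; apply: (le_trans Hl); rewrite lee_fin /l invfM -mulrA mulVf ?mulr1 //.
      rewrite dotpZr /l => H.
      have : dotp y z <= t * r.
        by move: H; rewrite mulrC ler_pdivrMr ?mul1r // mulr_gt0.
      lra.
  + by rewrite lee_fin ltW.
- move=> y Hy; exists (2^-1 *: y).
    move=> z; rewrite /sublevel /= => Hz.
    rewrite dotpZr.
    have Hs : (adiv (dotp y z - 1) (phi z) <= t%:E)%E.
      apply: le_trans Hy; apply: ereal_sup_ubound; by exists z.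
    move: (phi0 z) Hs Hz; case Ez: (phi z) => [r| |] //= r0.
    rewrite lee_fin in r0.
    case: ifPn => [/eqP r00|rn0].
    * case: ifPn => // H; rewrite -leNgt dotpC in H; move=> _ _; lra.
    have rp : 0 < r by rewrite lt_def rn0.
    rewrite !lee_fin ler_pdivrMr // => H1 H2.
    have H3 : t * r <= 1 by rewrite -ler_pdivlMl // mulr1.
    rewrite dotpC; move: H1 H3; set a := dotp y z; set b := t * r => H1 H3; clear -H1 H3; lra.
  by rewrite scalerA mulfV ?scale1r.
Qed.
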